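(* The scheme-theoretic image of the morphism $\pi:\mathscr E\to\mathscr L$ coincides with the variety of X-states $\mathscr X$.
   Context: Let $V_1,\dots,V_n$ be two-dimensional complex vector spaces, $\mathscr V_i=\mathfrak{sl}(V_i)$ with form $\langle A,B\rangle=\tfrac12\operatorname{tr}(AB)$, $\mathscr L$ the affine space of trace-one endomorphisms of $V_1\otimes\cdots\otimes V_n$, identified (Bloch model) with $\bigoplus_{\emptyset\ne I\subseteq\{1,\dots,n\}}\mathscr V_I$, $\mathscr V_I=\bigotimes_{i\in I}\mathscr V_i$, via $\rho=2^{-n}\mathrm{id}+\sum_I\rho_I$ (with $\mathscr V_I$ embedded in $\mathrm{End}(V_1\otimes\cdots\otimes V_n)$ by tensoring with identities). An X-state is a $\rho\in\mathscr L$ which for some ordered bases $\{e^i_0,e^i_1\}$ of the $V_i$ preserves the span of basis tensors $e^1_{\phi(1)}\otimes\cdots\otimes e^n_{\phi(n)}$ with $\sum\phi(i)$ even and the span of those with $\sum\phi(i)$ odd; $\mathscr X$ is the Zariski closure in $\mathscr L$ of the set of X-states with reduced structure. Let $\breve{\mathbb P}(\mathscr V_i)\subseteq\mathbb P(\mathscr V_i)$ be the open set of lines spanned by $v$ with $\langle v,v\rangle\neq0$, and $\breve P=\prod_i\breve{\mathbb P}(\mathscr V_i)$. For $\mathfrak B=(\mathscr V_1^\ell,\dots,\mathscr V_n^\ell)\in\breve P$ let $\mathscr V_i^t=(\mathscr V_i^\ell)^\perp$, let $\mathscr V_I^e$ be spanned by tensors $\bigotimes_{i\in I}x_i$ with each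 $x_i\in\mathscr V_i^\ell$ or $x_i\in\mathscr V_i^t$ and an even number transversal, and $X(\mathfrak B)=\bigoplus_{\emptyset\ne I}\mathscr V_I^e$. Let $\mathscr E\to\breve P$ be the vector bundle (a subbundle of the trivial bundle $\breve P\times\mathscr L$, namely the direct sum over pairs of disjoint $I,J$ with $I\cup J\ne\emptyset$, $|J|$ even, of the bundles with fibers $\bigotimes_{i\in I}\mathscr V_i^\ell\otimes\bigotimes_{j\in J}\mathscr V_j^t$) whose fiber over $\mathfrak B$ is $X(\mathfrak B)$, and $\pi:\mathscr E\to\mathscr L$ the morphism restricting on each fiber to the inclusion $X(\mathfrak B)\subseteq\mathscr L$. *)

(* Defs.v *)
From HB Require Import structures.
From mathcomp Require Import all_boot all_algebra.
From mathcomp Require Import reals complex.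
From mathcomp Require mpoly.

Set Implicit Arguments.
Unset Strict Implicit.
Unset Printing Implicit Defensive.
Import GRing.Theory.
Local Open Scope ring_scope.

Section XStates.
Variables (K : fieldType) (n : nat).

(* Basis labels phi : {1..n} -> {0,1} of the tensor basis
   e^1_{phi 1} (x) ... (x) e^n_{phi n} of V_1 (x) ... (x) V_n, V_i = K^2. *)
Definition idx := {ffun 'I_n -> 'I_2}.

(* Endomorphisms of V_1 (x) ... (x) V_n, as matrices indexed by idx. *)
Definition op := idx -> idx -> K.

Definition idop : op := fun phi psi => (phi == psi)%:R.

Definition trace (rho : op) : K := \sum_phi rho phi phi.

Definition in_L (rho : op) : Prop := trace rho = 1.

Definition tens (x : 'I_n -> 'M[K]_2) : op :=
  fun phi psi => \prod_i x i (phi i) (psi i).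

Definition sl2 (A : 'M[K]_2) : Prop := \tr A = 0.
Definition formB (A B : 'M[K]_2) : K := 2%:R^-1 * \tr (A *m B).

(* A point B = (V_1^l, ..., V_n^l) of P-breve, given by spanning vectors v i
   of the lines V_i^l, with v i in sl(V_i) and <v i, v i> <> 0. *)
Definition in_Pbreve (v : 'I_n -> 'M[K]_2) : Prop :=
  forall i, sl2 (v i) /\ formB (v i) (v i) <> 0.

Definition in_line (w x : 'M[K]_2) : Prop := exists c : K, x = c *: w.
Definition in_transv (w x : 'M[K]_2) : Prop := sl2 x /\ formB w x = 0.

(* Spanning tensors of X(B) = (+)_{I nonempty} V_I^e, embedded in End(V) by
   tensoring with identities: I nonempty, J subset I the transversal factors,
   |J| even, x_i in V_i^l for i in I\J, x_i in V_i^t for i in J, x_i = id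
   for i outside I. *)
Definition X_generator (v : 'I_n -> 'M[K]_2) (y : op) : Prop :=
  exists (I J : {set 'I_n}) (x : 'I_n -> 'M[K]_2),
    I != set0 /\ J \subset I /\ ~~ odd #|J| /\
    (forall i, i \in I :\: J -> in_line (v i) (x i)) /\
    (forall i, i \in J -> in_transv (v i) (x i)) /\
    (forall i, i \notin I -> x i = 1%:M) /\
    y = tens x.

(* The fibre X(B) of E over B, viewed inside L via the Bloch model
   rho = 2^{-n} id + sum_I rho_I: i.e. the set 2^{-n} id + span(generators). *)
Definition X_fiber (v : 'I_n -> 'M[K]_2) (rho : op) : Prop :=
  exists (m : nat) (c : 'I_m -> K) (g : 'I_m -> op),
    (forall k, X_generator v (g k)) /\
    forall phi psi,
      rho phi psi = (2 ^ n)%:R^-1 * idop phi psi + \sum_k c k * g k phi psi.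

Definition pi_image (rho : op) : Prop :=
  exists v, in_Pbreve v /\ X_fiber v rho.

Definition parity (phi : idx) : bool := odd (\sum_i (phi i : nat)).

(* Basis tensor f_psi = e^1_{psi 1} (x) ... (x) e^n_{psi n}, where e^i_j is
   the j-th column of the invertible matrix B i. *)
Definition basis_tensor (B : 'I_n -> 'M[K]_2) (psi : idx) : idx -> K :=
  fun chi => \prod_i B i (chi i) (psi i).

Definition apply_op (rho : op) (f : idx -> K) : idx -> K :=
  fun chi => \sum_chi' rho chi chi' * f chi'.

Definition Xstate (rho : op) : Prop :=
  in_L rho /\
  exists B : 'I_n -> 'M[K]_2,
    (forall i, B i \in unitmx) /\
    forall psi, exists c : idx -> K,
      (forall phi, parity phi != parity psi -> c phi = 0) /\
      apply_op rho (basis_tensor B psi) =1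
        (fun chi => \sum_phi c phi * basis_tensor B phi chi).

(* Polynomial functions on the ambient coordinate space End(V) (coordinates
   = matrix entries, enumerated by enum_val). *)
Definition ncoords := #|{: idx * idx}|.
Definition coords (rho : op) : 'I_ncoords -> K :=
  fun k => rho (enum_val k).1 (enum_val k).2.

Definition vanishing_ideal (S : op -> Prop) (f : mpoly.mpoly ncoords K) : Prop :=
  forall rho, S rho -> mpoly.meval (coords rho) f = 0.

(* The ideal of the scheme-theoretic image of pi (E is reduced, so this is
   the kernel of pi^* : functions on L -> functions on E). *)
Definition scheme_image_ideal := vanishing_ideal pi_image.
(* The ideal of X = Zariski closure of X-states with reduced structure. *)
Definition Xvariety_ideal := vanishing_ideal Xstate.

End XStates.

(* Main.v *)
Require Import Defs.
From mathcomp Require Import all_boot all_algebra.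
From mathcomp Require Import reals complex.
From mathcomp Require mpoly.
From mathcomp Require Import zify ring.
Set Implicit Arguments. Unset Strict Implicit. Unset Printing Implicit Defensive.
Import GRing.Theory Num.Theory.
Local Open Scope ring_scope.

Definition o1 : 'I_2 := Ordinal (isT : 1 < 2)%N.

Lemma I2P (i : 'I_2) : i = ord0 \/ i = o1.
Proof. case: i => [[|[|//]]] H; [left|right]; exact: val_inj. Qed.

Lemma sum2 (V : nmodType) (F : 'I_2 -> V) : \sum_(k < 2) F k = F ord0 + F o1.
Proof. by rewrite big_ord_recl big_ord1; congr (_ + F _); apply: val_inj. Qed.

Lemma I2_neq (a b : 'I_2) : a != b -> (a = ord0 /\ b = o1) \/ (a = o1 /\ b = ord0).
Proof. by case: (I2P a) => ->; case: (I2P b) => ->; rewrite ?eqxx //; auto. Qed.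

Section Proof.
Variables (K : numClosedFieldType) (n : nat).
Local Notation idx := (Defs.idx n).
Local Notation op := (Defs.op K n).

Definition Zm : 'M[K]_2 :=
  \matrix_(i, j) (if i == j then (if i == ord0 then 1 else -1) else 0).

Lemma tensM (X Y : 'I_n -> 'M[K]_2) p q :
  \sum_(chi : idx) tens X p chi * tens Y chi q = tens (fun i => X i *m Y i) p q.
Proof.
rewrite /tens.
transitivity (\sum_(chi : idx) \prod_i (X i (p i) (chi i) * Y i (chi i) (q i))).
  by apply: eq_bigr => chi _; rewrite big_split.
rewrite -(bigA_distr_bigA (fun i k => X i (p i) k * Y i k (q i))) /=.
by apply: eq_bigr => i _; rewrite mxE.
Qed.

Lemma tens1 p q : tens (fun _ => (1%:M : 'M[K]_2)) p q = idop K (n:=n) p q.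
Proof.
rewrite /tens /idop.
have [->|Hpq] := eqVneq p q.
  by apply: big1 => i _; rewrite mxE eqxx.
have [i Hi] : exists i, p i != q i.
  apply/existsP; rewrite -negb_forall; apply: contra Hpq => /forallP H.
  by apply/eqP/ffunP => i; apply/eqP.
by rewrite (bigD1 i) //= mxE (negbTE Hi) mul0r.
Qed.

Lemma tensZ (c : 'I_n -> K) (M : 'I_n -> 'M[K]_2) p q :
  tens (fun i => c i *: M i) p q = (\prod_i c i) * tens M p q.
Proof. by rewrite /tens -big_split; apply: eq_bigr => i _; rewrite mxE. Qed.

Lemma trace_tens (x : 'I_n -> 'M[K]_2) : trace (tens x) = \prod_i \tr (x i).
Proof.
rewrite /trace /tens (bigA_distr_bigA (fun i k => x i k k)) /=.
by [].
Qed.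

Lemma card_idx : #|{: idx}| = (2 ^ n)%N.
Proof. by rewrite card_ffun !card_ord. Qed.

Lemma trace_id : trace (idop K (n:=n)) = (2 ^ n)%:R.
Proof.
rewrite /trace /idop.
under eq_bigr do rewrite eqxx.
by rewrite sumr_const card_idx.
Qed.

Lemma parity_card (phi psi : idx) :
  parity phi (+) parity psi = odd #|[set i | phi i != psi i]|.
Proof.
rewrite /parity -oddD -big_split /=.
rewrite (bigID (fun i => phi i != psi i)) /= oddD.
have -> : (\sum_(i | phi i != psi i) (phi i + psi i) = \sum_(i | phi i != psi i) 1)%N.
  apply: eq_bigr => i Hi; case: (I2_neq Hi) => -[-> ->] //.
have -> : (\sum_(i | ~~ (phi i != psi i)) (phi i + psi i) =
          2 * \sum_(i | ~~ (phi i != psi i)) phi i)%N.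
  rewrite big_distrr /=; apply: eq_bigr => i; rewrite negbK => /eqP ->; lia.
rewrite sum1_card oddM /= addbF; congr odd.
by apply: eq_card => i; rewrite inE.
Qed.


Definition inS (v : 'I_n -> 'M[K]_2) (y : op) : Prop :=
  exists m (c : 'I_m -> K) (g : 'I_m -> op),
    (forall k, X_generator v (g k)) /\ forall p q, y p q = \sum_k c k * g k p q.

Definition inA (v : 'I_n -> 'M[K]_2) (y : op) : Prop :=
  exists s, inS v (fun p q => y p q - s * idop K p q).

Section Span.
Variable v : 'I_n -> 'M[K]_2.

Lemma inS_ext y z : (forall p q, y p q = z p q) -> inS v y -> inS v z.
Proof. move=> E [m [c [g [Hg Hy]]]]; exists m, c, g; split=> // p q; by rewrite -E. Qed.

Lemma inS0 : inS v (fun _ _ => 0).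
Proof. exists 0%N, (fun _ => 0), (fun _ _ _ => 0); split; first by case.
by move=> p q; rewrite big_ord0. Qed.

Lemma inS_gen g : X_generator v g -> inS v g.
Proof. move=> Hg; exists 1%N, (fun _ => 1), (fun _ => g); split => // p q.
by rewrite big_ord1 mul1r. Qed.

Lemma inS_scale a y : inS v y -> inS v (fun p q => a * y p q).
Proof. move=> [m [c [g [Hg Hy]]]]; exists m, (fun k => a * c k), g; split => // p q.
by rewrite /= Hy big_distrr /=; apply: eq_bigr => k _; rewrite mulrA. Qed.

Lemma inS_add y z : inS v y -> inS v z -> inS v (fun p q => y p q + z p q).
Proof.
move=> [m1 [c1 [g1 [Hg1 Hy]]]] [m2 [c2 [g2 [Hg2 Hz]]]].
exists (m1 + m2)%N, (fun k => match split k with inl a => c1 a | inr b => c2 b end),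
  (fun k => match split k with inl a => g1 a | inr b => g2 b end); split.
  by move=> k; case: (split k).
move=> p q; rewrite big_split_ord Hy Hz /=; congr (_ + _); apply: eq_bigr => k _.
  by rewrite (unsplitK (inl k : 'I_m1 + 'I_m2)).
by rewrite (unsplitK (inr k : 'I_m1 + 'I_m2)).
Qed.

Lemma inA_ext y z : (forall p q, y p q = z p q) -> inA v y -> inA v z.
Proof. move=> E [s Hs]; exists s; apply: inS_ext Hs => p q; by rewrite E. Qed.

Lemma inA0 : inA v (fun _ _ => 0).
Proof. exists 0; apply: inS_ext inS0 => p q; by rewrite mul0r subrr. Qed.

Lemma inA_id : inA v (idop K (n:=n)).
Proof. exists 1; apply: inS_ext inS0 => p q; by rewrite mul1r subrr. Qed.

Lemma inA_gen g : X_generator v g -> inA v g.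
Proof. move=> Hg; exists 0; apply: inS_ext (inS_gen Hg) => p q; by rewrite mul0r subr0. Qed.

Lemma inA_scale a y : inA v y -> inA v (fun p q => a * y p q).
Proof. move=> [s Hs]; exists (a * s); apply: inS_ext (inS_scale a Hs) => p q.
by rewrite mulrBr mulrA. Qed.

Lemma inA_add y z : inA v y -> inA v z -> inA v (fun p q => y p q + z p q).
Proof. move=> [s Hs] [t Ht]; exists (s + t); apply: inS_ext (inS_add Hs Ht) => p q.
by rewrite mulrDl opprD addrACA. Qed.

Lemma inA_sum (I : Type) (r : seq I) (f : I -> op) :
  (forall i, inA v (f i)) -> inA v (fun p q => \sum_(i <- r) f i p q).
Proof.
move=> Hf; elim: r => [|a r IH].
  by apply: (inA_ext _ inA0) => p q; rewrite big_nil.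
by apply: inA_ext (inA_add (Hf a) IH) => p q; rewrite big_cons.
Qed.

Lemma gen_trace g : (forall i, sl2 (v i)) -> X_generator v g -> trace g = 0.
Proof.
move=> Hv [I [J [x [HI [HJI [_ [Hl [Ht [H1 ->]]]]]]]]].
rewrite trace_tens; apply/eqP/prodf_eq0.
case/set0Pn: HI => i Hi; exists i => //; apply/eqP.
have [iJ|iJ] := boolP (i \in J).
  by case: (Ht i iJ).
have [c ->] : in_line (v i) (x i) by apply: Hl; rewrite inE iJ.
by rewrite mxtraceZ (Hv i) mulr0.
Qed.

Lemma inS_trace y : (forall i, sl2 (v i)) -> inS v y -> trace y = 0.
Proof.
move=> Hv [m [c [g [Hg Hy]]]].
rewrite /trace; under eq_bigr do rewrite Hy.
rewrite exchange_big /= big1 // => k _.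
by rewrite -big_distrr /= -/(trace (g k)) (gen_trace Hv (Hg k)) mulr0.
Qed.

Lemma inA_trace y : (forall i, sl2 (v i)) -> inA v y -> trace y = 1 ->
  inS v (fun p q => y p q - (2 ^ n)%:R^-1 * idop K p q).
Proof.
move=> Hv [s Hs] Ht.
have Hs' := inS_trace Hv Hs.
have E : trace y = s * (2 ^ n)%:R.
  move: Hs'; rewrite /trace sumrB -big_distrr /= -/(trace (idop K (n:=n))) trace_id.
  by move/eqP; rewrite subr_eq0 => /eqP.
have H2 : (2 ^ n)%:R != 0 :> K by rewrite pnatr_eq0 expn_eq0.
have -> : (2 ^ n)%:R^-1 = s.
  have : s * (2 ^ n)%:R = 1 by rewrite -E.
  by move/(congr1 (fun z => z / (2 ^ n)%:R)); rewrite mulfK // div1r.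
exact: Hs.
Qed.
End Span.

Definition mk2 (a b c d : K) : 'M[K]_2 :=
  \matrix_(i, j) (if i == ord0 then (if j == ord0 then a else b)
                  else (if j == ord0 then c else d)).

Ltac mx2 := apply/matrixP; let i := fresh "i" in let j := fresh "j" in
  intros i j; case: (I2P i) => ->; case: (I2P j) => ->;
  rewrite ?(mxE, sum2) /=.

Lemma mk2E (w : 'M[K]_2) : w = mk2 (w ord0 ord0) (w ord0 o1) (w o1 ord0) (w o1 o1).
Proof. by mx2. Qed.

Lemma trZ : \tr Zm = 0.
Proof. by rewrite /mxtrace sum2 !mxE /= subrr. Qed.

Lemma ZZ : Zm *m Zm = 1%:M.
Proof. mx2; ring. Qed.

Lemma tr2 (A : 'M[K]_2) : \tr A = A ord0 ord0 + A o1 o1.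
Proof. by rewrite /mxtrace sum2. Qed.

Lemma trZy (y : 'M[K]_2) : \tr (Zm *m y) = y ord0 ord0 - y o1 o1.
Proof. rewrite tr2 ?(mxE, sum2) /=; ring. Qed.

Lemma diag_core (p q r : K) : p ^+ 2 + q * r != 0 ->
  exists l B, [/\ l != 0, B \in unitmx & mk2 p q r (- p) *m B = l *: (B *m Zm)].
Proof.
move=> Hd.
have [l [lsq lnz lp]] : exists l, [/\ l ^+ 2 = p ^+ 2 + q * r, l != 0 & l + p != 0].
  set l0 := sqrtC (p ^+ 2 + q * r).
  have l0sq : l0 ^+ 2 = p ^+ 2 + q * r by rewrite sqrtCK.
  have l0nz : l0 != 0 by apply: contraNneq Hd => E; rewrite -l0sq E expr0n.
  have [E|E] := eqVneq (l0 + p) 0.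
    exists (- l0); split; rewrite ?sqrrN ?oppr_eq0 //.
    have -> : p = - l0 by apply/eqP; rewrite -(subr_eq0 p) opprK addrC E.
    by rewrite -opprD oppr_eq0 -mulr2n mulrn_eq0 negb_or l0nz.
  by exists l0; split.
Ltac byrel k l p q r lsq := apply/eqP; rewrite -subr_eq0; apply/eqP;
  match goal with |- ?A = 0 =>
    transitivity (k * (l ^+ 2 - (p ^+ 2 + q * r))); [ring | by rewrite lsq subrr mulr0] end.
Ltac tryrel l p q r lsq := first [ byrel (0:K) l p q r lsq | byrel (1:K) l p q r lsq | byrel (-1:K) l p q r lsq].
pose B := mk2 (l + p) (- q) r (l + p).
pose B' := mk2 (l + p) q (- r) (l + p).
have BB' : B *m B' = (2%:R * l * (l + p)) *: 1%:M.
  rewrite /B /B'; mx2; tryrel l p q r lsq.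
have dnz : 2%:R * l * (l + p) != 0.
  by rewrite !mulf_neq0 // pnatr_eq0.
exists l, B; split => //.
  apply: (@proj1 _ (((2%:R * l * (l + p))^-1 *: B') \in unitmx)); apply: mulmx1_unit.
  by rewrite -scalemxAr BB' scalerA mulVf // scale1r.
rewrite /B; mx2; tryrel l p q r lsq.
Qed.

Lemma diag2 (w : 'M[K]_2) : \tr w = 0 -> \tr (w *m w) != 0 ->
  exists l B, [/\ l != 0, B \in unitmx & w *m B = l *: (B *m Zm)].
Proof.
move=> H0 H1.
have w11 : w o1 o1 = - w ord0 ord0.
  by apply/eqP; rewrite -subr_eq0 opprK addrC -tr2 H0.
rewrite (mk2E w) w11; apply: diag_core.
apply: contra H1 => /eqP E; apply/eqP.
rewrite tr2 ?(mxE, sum2) /= w11.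
transitivity (2%:R * (w ord0 ord0 ^+ 2 + w ord0 o1 * w o1 ord0)); first ring.
by rewrite E mulr0.
Qed.

Lemma tr_conj (B A : 'M[K]_2) : B \in unitmx -> \tr (B *m A *m invmx B) = \tr A.
Proof. by move=> HB; rewrite mxtrace_mulC mulmxA mulVmx // mul1mx. Qed.

Lemma conj_delta (B C : 'M[K]_2) a b x y :
  (B *m delta_mx a b *m C) x y = B x a * C b y.
Proof.
case: (I2P a) => ->; case: (I2P b) => ->; case: (I2P x) => ->; case: (I2P y) => ->;
  rewrite ?(mxE, sum2) /=; ring.
Qed.

Lemma tens_parity (y : 'I_n -> 'M[K]_2) (J : {set 'I_n}) (phi psi : idx) :
  ~~ odd #|J| ->
  (forall i, i \notin J -> y i ord0 o1 = 0 /\ y i o1 ord0 = 0) ->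
  (forall i, i \in J -> y i ord0 ord0 = 0 /\ y i o1 o1 = 0) ->
  parity phi != parity psi -> tens y phi psi = 0.
Proof.
move=> HJ Hd Ha Hp; apply/eqP; apply: contraNT Hp => Hne.
have Hi : forall i, y i (phi i) (psi i) != 0.
  move=> i; apply: contra Hne => /eqP H; apply/prodf_eq0; exists i => //; exact/eqP.
have EJ : J = [set i | phi i != psi i].
  apply/setP => i; rewrite inE.
  have := Hi i.
  have [iJ|iJ] := boolP (i \in J).
    have [h0 h1] := Ha i iJ.
    by case: (I2P (phi i)) => ->; case: (I2P (psi i)) => ->; rewrite ?h0 ?h1 ?eqxx.
  have [h0 h1] := Hd i iJ.
  by case: (I2P (phi i)) => ->; case: (I2P (psi i)) => ->; rewrite ?h0 ?h1 ?eqxx.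
move: (parity_card phi psi); rewrite -EJ (negbTE HJ).
by case: (parity phi); case: (parity psi).
Qed.

Lemma tens_inv (B : 'I_n -> 'M[K]_2) p q : (forall i, B i \in unitmx) ->
  tens (fun i => invmx (B i) *m B i) p q = idop K p q /\
  tens (fun i => B i *m invmx (B i)) p q = idop K p q.
Proof.
move=> HB; rewrite -tens1; split; apply: eq_bigr => i _.
  by rewrite mulVmx.
by rewrite mulmxV.
Qed.

Lemma tr_sim (B x : 'M[K]_2) : B \in unitmx -> \tr (invmx B *m (x *m B)) = \tr x.
Proof. by move=> HB; rewrite mxtrace_mulC -mulmxA mulmxV // mulmx1. Qed.

Lemma two_zero (a b : K) : a + b = 0 -> a - b = 0 -> a = 0 /\ b = 0.
Proof.
move=> H1 H2.
have Ha : 2%:R * a = 0.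
  by transitivity ((a + b) + (a - b)); [ring | rewrite H1 H2 addr0].
have a0 : a = 0.
  by move/eqP: Ha; rewrite mulf_eq0 pnatr_eq0 /= => /eqP.
by split => //; move: H1; rewrite a0 add0r.
Qed.

Lemma genA_zero (w : 'I_n -> 'M[K]_2) (l : 'I_n -> K) (B : 'I_n -> 'M[K]_2) g phi psi :
  (forall i, [/\ l i != 0, B i \in unitmx & w i *m B i = l i *: (B i *m Zm)]) ->
  X_generator w g -> parity phi != parity psi ->
  \sum_a tens (fun i => invmx (B i)) phi a * \sum_b g a b * tens B b psi = 0.
Proof.
move=> HB [I [J [x [_ [HJI [HJ [Hl [Ht [H1 ->]]]]]]]]] Hp.
under eq_bigr do rewrite tensM.
rewrite tensM.
apply: (tens_parity HJ) => // i iJ.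
  have [lnz Bu EB] := HB i.
  have [iI|iI] := boolP (i \in I).
    have [c ->] : in_line (w i) (x i) by apply: Hl; rewrite inE iJ.
    rewrite -scalemxAl EB -!scalemxAr mulKmx //.
    by rewrite !mxE /= !mulr0.
  rewrite H1 // mul1mx mulVmx //.
  by rewrite !mxE.
have [lnz Bu EB] := HB i.
have [sl hf] := Ht i iJ.
set y := invmx (B i) *m (x i *m B i).
have ty : \tr y = 0 by rewrite /y tr_sim.
have tZy : \tr (Zm *m y) = 0.
  have : \tr ((l i *: Zm) *m y) = 0.
    have -> : l i *: Zm = invmx (B i) *m (w i *m B i).
      by rewrite EB -scalemxAr mulKmx.
    rewrite /y !mulmxA mulmxK // -(mulmxA (invmx (B i)) (w i) (x i)) -mulmxA tr_sim //.
    move: hf; rewrite /formB => /eqP; rewrite mulf_eq0 invr_eq0 pnatr_eq0 /=.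
    by move/eqP.
  by rewrite -scalemxAl mxtraceZ => /eqP; rewrite mulf_eq0 (negbTE lnz) /= => /eqP.
rewrite trZy in tZy; rewrite tr2 in ty.
exact: two_zero.
Qed.

Lemma C_lin (X W : 'I_n -> 'M[K]_2) (s : K) m (c : 'I_m -> K) (g : 'I_m -> op)
    (rho : op) phi psi :
  (forall a b, rho a b = s * idop K a b + \sum_k c k * g k a b) ->
  \sum_a tens X phi a * \sum_b rho a b * tens W b psi =
    s * tens (fun i => X i *m W i) phi psi +
    \sum_k c k * (\sum_a tens X phi a * \sum_b g k a b * tens W b psi).
Proof.
move=> Hr.
have E1 : forall a, \sum_b rho a b * tens W b psi =
    s * tens W a psi + \sum_k c k * \sum_b g k a b * tens W b psi.
  move=> a; under eq_bigr do rewrite Hr mulrDl.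
  rewrite big_split /=; congr (_ + _).
    rewrite (bigD1 a) //= /idop eqxx mulr1 big1 ?addr0 // => b Hb.
    by rewrite eq_sym (negbTE Hb) mulr0 mul0r.
  under eq_bigr do rewrite big_distrl /=.
  rewrite exchange_big /=; apply: eq_bigr => k _.
  by rewrite big_distrr /=; apply: eq_bigr => b _; rewrite mulrA.
under eq_bigr do rewrite E1 mulrDr.
rewrite big_split /=; congr (_ + _).
  rewrite -tensM big_distrr /=; apply: eq_bigr => a _; by rewrite mulrCA.
under eq_bigr do rewrite big_distrr /=.
rewrite exchange_big /=; apply: eq_bigr => k _.
by rewrite big_distrr /=; apply: eq_bigr => a _; rewrite mulrCA.
Qed.

Lemma dirA (rho : op) : pi_image rho -> Xstate rho.
Proof.
move=> [w [Pw [m [c [g [Hg Hr]]]]]].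
have Hsl : forall i, sl2 (w i) by move=> i; case: (Pw i).
have HS : inS w (fun p q => \sum_k c k * g k p q) by exists m, c, g.
split.
  rewrite /in_L /trace; under eq_bigr do rewrite Hr.
  rewrite big_split /= -big_distrr /= -/(trace (idop K (n:=n))) trace_id.
  move: (inS_trace Hsl HS); rewrite /trace => ->.
  by rewrite addr0 mulVf // pnatr_eq0 expn_eq0.
have : forall i, exists lB : K * 'M[K]_2,
    [/\ lB.1 != 0, lB.2 \in unitmx & w i *m lB.2 = lB.1 *: (lB.2 *m Zm)].
  move=> i; have [sl hf] := Pw i.
  have [l [B [H1 H2 H3]]] : exists l B, [/\ l != 0, B \in unitmx & w i *m B = l *: (B *m Zm)].
    apply: diag2 => //; apply/eqP => E; apply: hf.
    rewrite /formB; apply/eqP; rewrite mulf_eq0; apply/orP; right; apply/eqP; exact: E.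
  by exists (l, B).
case/fin_all_exists => lB HlB.
pose B := fun i => (lB i).2.
have HB : forall i, B i \in unitmx by move=> i; case: (HlB i).
exists B; split => // psi.
exists (fun phi => \sum_a tens (fun i => invmx (B i)) phi a *
                   \sum_b rho a b * tens B b psi); split.
  move=> phi Hp.
  rewrite (C_lin (fun i => invmx (B i)) B phi psi Hr) big1 ?addr0.
    rewrite (proj1 (tens_inv _ _ HB)) /idop.
    case: eqP => [E|_]; last by rewrite mulr0.
    by rewrite E eqxx in Hp.
  move=> k _; rewrite (genA_zero (l := fun i => (lB i).1) _ (Hg k) Hp) ?mulr0 //.
move=> chi.
transitivity (\sum_chi' rho chi chi' * tens B chi' psi); first reflexivity.
transitivity (\sum_phi (\sum_a tens (fun i => invmx (B i)) phi a *
                   \sum_b rho a b * tens B b psi) * tens B chi phi); last reflexivity.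
symmetry.
transitivity (\sum_phi \sum_a tens B chi phi * tens (fun i => invmx (B i)) phi a *
                   \sum_b rho a b * tens B b psi).
  apply: eq_bigr => phi _; rewrite mulrC big_distrr /=; apply: eq_bigr => a _.
  by rewrite mulrA.
rewrite exchange_big /=.
under eq_bigr do rewrite -big_distrl /= tensM (proj2 (tens_inv _ _ HB)).
rewrite (bigD1 chi) //= /idop eqxx mul1r [X in _ + X]big1 ?addr0 // => a Ha.
by rewrite eq_sym (negbTE Ha) mul0r.
Qed.

Definition cc (a b k : 'I_2) : K :=
  if k == ord0 then (if a == b then 2%:R^-1 else 0)
  else (if a == b then (if a == ord0 then 2%:R^-1 else - 2%:R^-1) else 1).

Definition M0 (a b k : 'I_2) : 'M[K]_2 :=
  if k == ord0 then 1%:M else (if a == b then Zm else delta_mx a b).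

Lemma half2 : 2%:R^-1 + 2%:R^-1 = 1 :> K.
Proof. by field. Qed.

Lemma delta_decomp a b : delta_mx a b = \sum_k cc a b k *: M0 a b k.
Proof.
rewrite sum2 /cc /M0 /=.
case: (I2P a) => ->; case: (I2P b) => ->; mx2;
  rewrite ?mulr1 ?mulr0 ?addr0 ?add0r ?mulrN1 ?opprK ?half2 ?subrr //.
Qed.

Lemma tr_delta (a b : 'I_2) : a != b -> \tr (delta_mx a b : 'M[K]_2) = 0 /\
  \tr (Zm *m delta_mx a b) = 0.
Proof.
by case/I2_neq => -[-> ->]; rewrite trZy !tr2 !mxE /= ?subrr ?addr0 ?add0r.
Qed.

Lemma LB (B : 'I_n -> 'M[K]_2) (phi psi : idx) : (forall i, B i \in unitmx) ->
  parity phi = parity psi ->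
  inA (fun i => B i *m Zm *m invmx (B i))
      (tens (fun i => B i *m delta_mx (phi i) (psi i) *m invmx (B i))).
Proof.
move=> HB Hpar.
pose M i k := B i *m M0 (phi i) (psi i) k *m invmx (B i).
have E : forall p q,
  \sum_(F : {ffun 'I_n -> 'I_2}) (\prod_i cc (phi i) (psi i) (F i)) *
      tens (fun i => M i (F i)) p q =
  tens (fun i => B i *m delta_mx (phi i) (psi i) *m invmx (B i)) p q.
  move=> p q; rewrite /tens.
  transitivity (\prod_i \sum_k cc (phi i) (psi i) k * M i k (p i) (q i)).
    rewrite (bigA_distr_bigA (fun i k => cc (phi i) (psi i) k * M i k (p i) (q i))) /=.
    by apply: eq_bigr => F _; rewrite big_split.
  apply: eq_bigr => i _.
  rewrite delta_decomp mulmx_sumr mulmx_suml summxE; apply: eq_bigr => k _.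
  by rewrite -scalemxAr -scalemxAl [RHS]mxE.
have X := inA_ext (v := fun i => B i *m Zm *m invmx (B i)) E; apply: X.
apply: (@inA_sum _ _ _ (fun (F : {ffun 'I_n -> 'I_2}) p q =>
   (\prod_i cc (phi i) (psi i) (F i)) * tens (fun i => M i (F i)) p q)) => F /=.
have [Z0|NZ] := eqVneq (\prod_i cc (phi i) (psi i) (F i)) 0.
  by apply: (inA_ext _ (inA0 _)) => p q; rewrite Z0 mul0r.
apply: inA_scale.
have Hoff : forall i, phi i != psi i -> F i = o1.
  move=> i Hi; case: (I2P (F i)) => // HF; move: NZ.
  by rewrite (bigD1 i) //= HF /cc /= (negbTE Hi) mul0r eqxx.
have M0E : forall i, M i ord0 = 1%:M.
  by move=> i; rewrite /M /M0 /= mulmx1 mulmxV.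
have [Hex|Hnex] := boolP [exists i, F i == o1].
  apply: inA_gen.
  exists [set i | F i == o1], [set i | phi i != psi i], (fun i => M i (F i)).
  split.
    by apply/set0Pn; case/existsP: Hex => i Hi; exists i; rewrite inE.
  split.
    by apply/subsetP => i; rewrite !inE => Hi; rewrite Hoff.
  split.
    by rewrite -parity_card Hpar addbb.
  split.
    move=> i; rewrite !inE negbK => /andP [/eqP Hpp /eqP HF].
    exists 1; rewrite scale1r HF /M /M0 /= Hpp eqxx //.
  split.
    move=> i; rewrite inE => Hi.
    rewrite (Hoff i Hi) /M /M0 /= (negbTE Hi).
    have [t1 t2] := tr_delta Hi.
    split; first by rewrite /sl2 tr_conj.
    rewrite /Defs.formB /=.
    have -> : B i *m Zm *m invmx (B i) *m (B i *m delta_mx (phi i) (psi i) *m invmx (B i))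
        = B i *m (Zm *m delta_mx (phi i) (psi i)) *m invmx (B i).
      by rewrite !mulmxA mulmxKV.
    by rewrite tr_conj // t2 mulr0.
  split => // i; rewrite inE => HF.
  by case: (I2P (F i)) HF => -> //; rewrite M0E.
apply: (inA_ext _ (inA_id _)) => p q.
rewrite -tens1; apply: eq_bigr => i _.
have : F i != o1 by apply: contra Hnex => Hi; apply/existsP; exists i.
by case: (I2P (F i)) => -> //; rewrite M0E.
Qed.

Lemma tensD (B C : 'I_n -> 'M[K]_2) (phi psi : idx) p q :
  tens (fun i => B i *m delta_mx (phi i) (psi i) *m C i) p q =
  tens B p phi * tens C psi q.
Proof. by rewrite /tens -big_split; apply: eq_bigr => i _; rewrite conj_delta. Qed.

Lemma dirB (rho : op) : Xstate rho -> pi_image rho.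
Proof.
move=> [HL [B [HB Hc]]].
case/fin_all_exists: Hc => c Hc.
pose v := fun i => B i *m Zm *m invmx (B i).
have Hsl : forall i, sl2 (v i) by move=> i; rewrite /sl2 /v tr_conj // trZ.
exists v; split.
  move=> i; split => //.
  rewrite /Defs.formB /=.
  have -> : v i *m v i = B i *m (Zm *m Zm) *m invmx (B i).
    by rewrite /v !mulmxA mulmxKV.
  rewrite tr_conj // ZZ mxtrace1 mulVf ?pnatr_eq0 //; apply/eqP; exact: oner_neq0.
have E : forall p q, rho p q = \sum_psi \sum_phi c psi phi *
    tens (fun i => B i *m delta_mx (phi i) (psi i) *m invmx (B i)) p q.
  move=> p q.
  transitivity (\sum_chi rho p chi * idop K chi q).
    rewrite (bigD1 q) //= /idop eqxx mulr1 [X in _ + X]big1 ?addr0 // => chi Hchi.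
    by rewrite (negbTE Hchi) mulr0.
  under eq_bigr => chi _ do rewrite -(proj2 (tens_inv chi q HB)) -tensM big_distrr /=.
  rewrite exchange_big /=; apply: eq_bigr => psi _.
  transitivity ((\sum_chi rho p chi * tens B chi psi) * tens (fun i => invmx (B i)) psi q).
    by rewrite big_distrl /=; apply: eq_bigr => chi _; rewrite mulrA.
  have Hap := (proj2 (Hc psi)) p.
  transitivity (apply_op rho (basis_tensor B psi) p * tens (fun i => invmx (B i)) psi q).
    reflexivity.
  rewrite Hap big_distrl /=; apply: eq_bigr => phi _.
  by rewrite tensD mulrA.
have HA : inA v rho.
  apply: inA_ext (fun p q => esym (E p q)) _.
  apply: inA_sum => psi; apply: inA_sum => phi.
  have [Hp|Hp] := eqVneq (parity phi) (parity psi).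
    by apply: inA_scale; apply: LB.
  by apply: (inA_ext _ (inA0 _)) => p q; rewrite (proj1 (Hc psi) phi Hp) mul0r.
have [m [cc' [g [Hg Hr]]]] := inA_trace Hsl HA HL.
exists m, cc', g; split => // p q.
by rewrite -Hr addrC subrK.
Qed.

End Proof.

Lemma pi_image_Xstate (K : numClosedFieldType) (n : nat) (rho : Defs.op K n) :
  pi_image rho <-> Xstate rho.
Proof. split; [exact: dirA | exact: dirB]. Qed.

Theorem lemma4p12 (R : realType) (n : nat) (f : mpoly.mpoly (ncoords n) R[i]) :
  scheme_image_ideal f <-> Xvariety_ideal f.
Proof.
rewrite /scheme_image_ideal /Xvariety_ideal /vanishing_ideal.
split=> H rho Hr; apply: H; exact/pi_image_Xstate.
Qed.
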